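(* Let $n\ge3$, $k\ge0$ with $k<n\le 2k$, and consider the $n+k$ points $u_1,\dots,u_{n+k}$ arranged clockwise on a circle. There do not exist points $v_1,v_2,v_3,v_4$ among these such that the pairs $(v_1,v_2)$ and $(v_3,v_4)$ each have size at most $k+1$, and (1) $v_3$ and $v_4$ both lie in $(v_1,v_2)$, and (2) every point $u_i$, $i\in[n+k]$, lies in $(v_1,v_2)$ or in $(v_3,v_4)$.
   Context: Points $u_1,\dots,u_{n+k}$ are evenly spaced on a circle in clockwise order. For points $v=u_i$ and $v'=u_j$, the size of the pair $(v,v')$ is the number of points visited (including both endpoints) when travelling clockwise from $v$ to $v'$, i.e. $j-i+1$ modulo $n+k$, taken in $\{1,\dots,n+k\}$. A point $w$ lies in $(v,v')$ if $w$ is one of the points visited when travelling clockwise from $v$ to $v'$ (endpoints included). *)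

(* Defs.v *)
From mathcomp Require Import all_boot.
Set Implicit Arguments. Unset Strict Implicit. Unset Printing Implicit Defensive.

(* Points u_1..u_N (N = n+k) are represented 0-based by 'I_N, in clockwise
   order: point i is u_(i+1). *)

Definition cw_dist (N : nat) (v w : 'I_N) : nat := (w + N - v) %% N.

(* Size of the pair (v,v'): number of points visited (endpoints included)
   going clockwise from v to v', i.e. j - i + 1 mod N taken in {1..N}. *)
Definition pair_size (N : nat) (v v' : 'I_N) : nat := (cw_dist v v').+1.

Definition lies_in (N : nat) (w v v' : 'I_N) : bool := cw_dist v w <= cw_dist v v'.

(* Main.v *)
Require Import Defs.
From mathcomp Require Import all_boot.
From mathcomp Require Import zify.

Lemma cwE N (v w : 'I_N) : cw_dist v w = if v <= w then w - v else w + N - v.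
Proof.
rewrite /cw_dist; case: leqP => h.
  by rewrite -addnBAC // modnDr modn_small // (leq_ltn_trans (leq_subr _ _)).
rewrite modn_small //; have := ltn_ord v; lia.
Qed.

Lemma mod2 x N : x < N + N -> x %% N = if x < N then x else x - N.
Proof.
case: ifP => h; first by rewrite modn_small.
move=> h2; have -> : x = (x - N) + N by lia.
rewrite modnDr modn_small; lia.
Qed.

Theorem proposition5p2 (n k : nat) :
  3 <= n -> k < n -> n <= 2 * k ->
  ~ (exists v1 v2 v3 v4 : 'I_(n + k),
       [/\ pair_size v1 v2 <= k.+1,
           pair_size v3 v4 <= k.+1,
           lies_in v3 v1 v2 && lies_in v4 v1 v2 &
           forall i : 'I_(n + k), lies_in i v1 v2 || lies_in i v3 v4]).
Proof.
move=> h3 hk hn [v1 [v2 [v3 [v4 [s12 s34 /andP[l3 l4] cov]]]]].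
have hp : 0 < n + k by lia.
pose i := Ordinal (ltn_pmod (v1 + (cw_dist v1 v2).+1) hp).
have := cov i.
have hi : (i : nat) = (v1 + (cw_dist v1 v2).+1) %% (n + k) by [].
move: hi s12 s34 l3 l4; rewrite /lies_in /pair_size !cwE.
have := ltn_ord v1; have := ltn_ord v2; have := ltn_ord v3; have := ltn_ord v4;
have := ltn_ord i.
move: (i : nat) (v1 : nat) (v2 : nat) (v3 : nat) (v4 : nat) => x a b c d.
move=> hx hd hc hb ha; rewrite mod2; last by case: ifP; lia.
repeat case: ifP; lia.
Qed.
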